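(* Let $k\ge 2$, $p\in(0,1)$, $q=1-p$. Then $M^{(k)}_1(p)=k-1$, and for all $n\ge 2$, $$M^{(k)}_n(p)=\frac1q\sum_{0<i<n} s^{(k)}_i\,(p^{k-1}q)^i\,M^{(k)}_{n-i}(p)\;+\;L^{(k)}_n(p),$$ where $$L^{(k)}_n(p)=(p^{k-1}q)^n\,\frac1q\sum_{j=k}^{(k-1)n} j\,d^{(k)}_{n,j}\,(1/p)^j,$$ and for $k\le j\le (k-1)n$, $$d^{(k)}_{n,j}=\binom{kn-2-j}{n-2}-\sum_{\ell=1}^{\,n-\lceil j/(k-1)\rceil} s^{(k)}_\ell\binom{k(n-\ell)-1-j}{n-\ell-1},$$ with $d^{(k)}_{n,j}=0$ for other $j$.
   Context: Matchbox process: fix integers $k\ge 2$, $n\ge 1$ and $p\in(0,1)$, $q=1-p$. Initially $k$ boxes each contain $n$ matches. At each time step, independently of the past, with probability $p$ a match is removed from a box currently containing the largest number of matches (''big-chooser''), and with probability $q$ a match is removed from a box currently containing the smallest number of matches (''little-chooser''); ties are broken arbitrarily (this does not affect the quantities below). The process is run until the first time some box is empty. The residue $X^{(k)}_n(p)$ is the total number of matches in the other $k-1$ boxes at that time, and $M^{(k)}_n(p)=\mathbb{E}[X^{(k)}_n(p)]$ is the expected residue. For $i\ge1$, $s^{(k)}_i=\frac{k-1}{ki-1}\binom{ki-1}{i-1}$. *)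

(* Defs.v *)
From mathcomp Require Import all_boot all_order all_algebra.
Set Implicit Arguments. Unset Strict Implicit. Unset Printing Implicit Defensive.
Import Order.TTheory GRing.Theory Num.Theory.
Local Open Scope ring_scope.

(* A state is the sequence of box contents (size k). *)
Definition bigcount (s : seq nat) : nat := \max_(x <- s) x.
Definition littlecount (s : seq nat) : nat := foldl minn (head 0%N s) s.

Definition remove_at (s : seq nat) (i : nat) : seq nat :=
  set_nth 0%N s i (nth 0%N s i).-1.

(* One step: b = true is the "big-chooser" move (remove from a largest box),
   b = false the "little-chooser" move (remove from a smallest box).
   Ties are broken by choosing the first such box. *)
Definition mb_step (b : bool) (s : seq nat) : seq nat :=
  if b then remove_at s (index (bigcount s) s)
  else remove_at s (index (littlecount s) s).

(* Run the process driven by the choice sequence cs until some box is empty;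
   then return the residue: total number of matches in the other boxes
   (the empty box contributes 0, so this is the total count). *)
Fixpoint mb_run (s : seq nat) (cs : seq bool) : nat :=
  if 0%N \in s then sumn s
  else match cs with
       | [::] => sumn s
       | b :: cs' => mb_run (mb_step b s) cs'
       end.

Definition choice_weight {R : ringType} (p : R) (cs : seq bool) : R :=
  \prod_(b <- cs) (if b then p else 1 - p).

(* Expected residue M^(k)_n(p).  k*n steps always suffice for some box to become
   empty (each step removes a match), so summing over all choice sequences of
   length k*n with the product probability is the exact expectation. *)
Definition M {R : ringType} (k n : nat) (p : R) : R :=
  \sum_(t : (k * n).-tuple bool)
     choice_weight p t * (mb_run (nseq k n) t)%:R.

Definition sk {R : fieldType} (k i : nat) : R :=
  (k.-1)%:R / ((k * i).-1)%:R * ('C((k * i).-1, i.-1))%:R.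

Definition ceil_div (j d : nat) : nat := (j + d.-1) %/ d.

Definition dk {R : fieldType} (k n j : nat) : R :=
  if (k <= j)%N && (j <= k.-1 * n)%N then
    ('C(k * n - 2 - j, n - 2))%:R
    - \sum_(1 <= l < (n - ceil_div j k.-1).+1)
         sk k l * ('C(k * (n - l) - 1 - j, n - l - 1))%:R
  else 0.

Definition Lk {R : fieldType} (k n : nat) (p : R) : R :=
  (p ^+ k.-1 * (1 - p)) ^+ n * (1 - p)^-1 *
  \sum_(k <= j < (k.-1 * n).+1) j%:R * dk k n j * (p^-1) ^+ j.

(* Main.v *)
Require Import Defs.
From mathcomp Require Import all_boot all_order all_algebra zify ring lra.
Set Implicit Arguments. Unset Strict Implicit. Unset Printing Implicit Defensive.
Import Order.TTheory GRing.Theory Num.Theory.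


Local Close Scope ring_scope.

Lemma remove_at_perm (s : seq nat) v : v \in s ->
  perm_eq (remove_at s (index v s)) (v.-1 :: rem v s).
Proof.
rewrite /remove_at; elim: s => [|x s IH] //= Hv.
case: eqP => [->|Hxv] /=; first by [].
have Hv' : v \in s by move: Hv; rewrite in_cons; case: eqP => // ?; subst.
apply: perm_trans (_ : perm_eq (x :: v.-1 :: rem v s) _).
  by rewrite perm_cons IH.
by rewrite -(cat1s x) -(cat1s v.-1) perm_catCA.
Qed.

Lemma foldl_minn_prop y (t : seq nat) :
  foldl minn y t \in y :: t /\ foldl minn y t <= y /\ (forall x, x \in t -> foldl minn y t <= x).
Proof.
elim: t y => [|x t IH] y /=; first by rewrite mem_seq1 eqxx.
have [H1 [H2 H3]] := IH (minn y x).
split; last split.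
- move: H1; rewrite !in_cons; case/orP=> [/eqP->|->]; last by rewrite !orbT.
  by rewrite /minn; case: ltnP => _; rewrite eqxx ?orbT.
- by apply: leq_trans H2 _; rewrite geq_minl.
- move=> z; rewrite in_cons; case/orP=> [/eqP->|/H3 //].
  by apply: leq_trans H2 _; rewrite geq_minr.
Qed.

Lemma littlecount_prop (s : seq nat) : s != [::] ->
  littlecount s \in s /\ (forall x, x \in s -> littlecount s <= x).
Proof.
case: s => [|y t] // _; rewrite /littlecount /= minnn.
have [H1 [H2 H3]] := foldl_minn_prop y t.
split => // x; rewrite in_cons; case/orP=> [/eqP->|/H3 //]; done.
Qed.

Lemma bigcount_prop (s : seq nat) : s != [::] ->
  bigcount s \in s /\ (forall x, x \in s -> x <= bigcount s).
Proof.
rewrite /bigcount; elim: s => [|y t IH] // _; rewrite big_cons.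
case: t IH => [|z t] IH.
  by rewrite big_nil maxn0 mem_seq1 eqxx; split => // x; rewrite mem_seq1 => /eqP->.
have [H1 H2] := IH isT.
split.
- rewrite /maxn; case: ltnP => _; first by rewrite in_cons H1 orbT.
  by rewrite in_cons eqxx.
- move=> x; rewrite in_cons; case/orP=> [/eqP->|/H2 Hx]; first by rewrite leq_maxl.
  by apply: leq_trans Hx _; rewrite leq_maxr.
Qed.


Local Close Scope ring_scope.

Definition st (c m h a : nat) := m :: nseq a h.+1 ++ nseq (c - a) h.
Definition rep c (s : seq nat) m D := exists h a,
  [/\ a < c, m <= h, D = c * (h - m) + a & perm_eq s (st c m h a)].

Lemma st_mem c m h a x : m <= h -> x \in st c m h a ->
  m <= x /\ x <= h.+1 /\ (x = h.+1 -> 0 < a).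
Proof.
move=> Hmh; rewrite /st in_cons mem_cat !mem_nseq.
case/orP=> [/eqP->|/orP[/andP[Ha /eqP->]|/andP[Ha /eqP->]]]; lia.
Qed.

Lemma rep_sum c s m D : rep c s m D -> sumn s = c.+1 * m + D.
Proof.
case=> h [a [Ha Hm -> /perm_sumn ->]]; rewrite /st /= sumn_cat !sumn_nseq; nia.
Qed.

Lemma rep_zero c s m D : rep c s m D -> (0 \in s) = (m == 0).
Proof.
case=> h [a [Ha Hm HD /perm_mem ->]]; apply/idP/idP.
  by move/(st_mem Hm) => ?; lia.
by move/eqP=> ->; rewrite in_cons eqxx.
Qed.

Lemma st_ne c m h a : st c m h a != [::]. Proof. by []. Qed.

Lemma rep_little c s m D : 0 < c -> rep c s m.+1 D -> rep c (mb_step false s) m (D + c).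
Proof.
move=> Hc [h [a [Ha Hm HD Hp]]].
have Hsn : s != [::] by apply/eqP=> E; move: Hp; rewrite E => /perm_size.
have [H1 H2] := littlecount_prop Hsn.
have Hv : littlecount s = m.+1.
  have := H1; rewrite (perm_mem Hp) => /(st_mem Hm) ?.
  have : m.+1 \in s by rewrite (perm_mem Hp) in_cons eqxx.
  move/H2 => ?; lia.
exists h, a; split; [lia|lia| |].
  rewrite HD. have E: h - m = (h - m.+1).+1 by lia. rewrite E mulnS. lia.
rewrite /mb_step; apply: perm_trans (remove_at_perm H1) _.
rewrite Hv /=; rewrite perm_cons -(perm_cons m.+1).
apply: perm_trans _ Hp; rewrite perm_sym -Hv; apply: perm_to_rem; exact: H1.
Qed.

Lemma perm_rem_head (s S' : seq nat) v : v \in s -> perm_eq s (v :: S') -> perm_eq (rem v s) S'.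
Proof.
move=> Hv Hp; rewrite -(perm_cons v); apply: perm_trans _ Hp.
by rewrite perm_sym; apply: perm_to_rem.
Qed.

Lemma rep_big c s m D : 0 < c -> rep c s m.+1 D.+1 -> rep c (mb_step true s) m.+1 D.
Proof.
move=> Hc [h [a [Ha Hm HD Hp]]].
have Hsn : s != [::] by apply/eqP=> E; move: Hp; rewrite E => /perm_size.
have [H1 H2] := bigcount_prop Hsn.
have Hin := H1; rewrite (perm_mem Hp) in Hin; have [Hv1 [Hv2 Hv3]] := st_mem Hm Hin.
rewrite /mb_step; set v := bigcount s in H1 H2 Hin Hv1 Hv2 Hv3 *.
case: a Ha HD Hp Hin Hv3 => [|a] Ha HD Hp Hin Hv3.
-
  have Hh : m.+1 < h.
    have : 0 < h - m.+1 by move: HD; case: (h - m.+1) => //; rewrite muln0.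
    lia.
  have Hhs : h \in s by rewrite (perm_mem Hp) /st in_cons mem_cat !mem_nseq subn0 eqxx andbT Hc !orbT.
  have Hvh : v = h by move: (H2 _ Hhs); lia.
  exists h.-1, c.-1; split; [lia|lia| |].
    have E: h - m.+1 = (h.-1 - m.+1).+1 by lia. rewrite E mulnS in HD. lia.
  apply: perm_trans (remove_at_perm H1) _.
  have HS : perm_eq s (v :: m.+1 :: nseq c.-1 h).
    apply: perm_trans Hp _; rewrite Hvh /st /= subn0.
    case: c Hc {Ha HD Hin Hv3 Hhs} => [|c'] //= _.
    by rewrite -(cat1s h) -(cat1s m.+1) perm_catCA.
  have HR := perm_rem_head H1 HS.
  apply: perm_trans (_ : perm_eq (v.-1 :: m.+1 :: nseq c.-1 h) _); first by rewrite perm_cons.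
  rewrite /st /= Hvh.
  have -> : c - c.-1 = 1 by lia.
  have -> : (h.-1).+1 = h by lia.
  apply/permP => P; rewrite /= !count_cat /= !count_nseq /=; lia.
-
  have Hhs : h.+1 \in s by rewrite (perm_mem Hp) /st in_cons mem_cat mem_nseq /= eqxx orbT.
  have Hvh : v = h.+1 by move: (H2 _ Hhs); lia.
  exists h, a; split; [lia|lia| |].
    lia.
  apply: perm_trans (remove_at_perm H1) _.
  have HS : perm_eq s (v :: m.+1 :: nseq a h.+1 ++ nseq (c - a.+1) h).
    apply: perm_trans Hp _; rewrite Hvh /st /=.
    by rewrite -(cat1s h.+1) -(cat1s m.+1) perm_catCA.
  have HR := perm_rem_head H1 HS.
  apply: perm_trans (_ : perm_eq (v.-1 :: m.+1 :: nseq a h.+1 ++ nseq (c - a.+1) h) _); first by rewrite perm_cons.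
  rewrite /st Hvh /=.
  have -> : c - a = (c - a.+1).+1 by lia.
  apply/permP => P; rewrite /= !count_cat /= !count_nseq /=; lia.
Qed.

Lemma rep_big0 c s m : 0 < c -> rep c s m.+1 0 -> rep c (mb_step true s) m c.
Proof.
move=> Hc [h [a [Ha Hm HD Hp]]].
have Ha0 : a = 0 by nia.
have Hh : h = m.+1.
  subst a; have : h - m.+1 = 0.
    move: HD; rewrite addn0; case: (h - m.+1) => // x; rewrite mulnS; lia.
  lia.
subst a h.
have Hsn : s != [::] by apply/eqP=> E; move: Hp; rewrite E => /perm_size.
have [H1 H2] := bigcount_prop Hsn.
have Hin := H1; rewrite (perm_mem Hp) in Hin; have [Hv1 [Hv2 Hv3]] := st_mem Hm Hin.
have Hvh : bigcount s = m.+1.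
  have : bigcount s != m.+2 by apply/eqP => /Hv3.
  lia.
exists m.+1, 0; split; [lia|lia| |].
  by rewrite subSnn muln1 addn0.
rewrite /mb_step; apply: perm_trans (remove_at_perm H1) _.
rewrite Hvh /st /= perm_cons; apply: perm_rem_head; first by rewrite -Hvh.
exact: Hp.
Qed.


Local Open Scope ring_scope.

Section Part1.
Variable R : realFieldType.
Variable p : R.
Variable c : nat.
Hypothesis Hc : (0 < c)%N.

Definition EL f s := \sum_(t : f.-tuple bool) choice_weight p t * (mb_run s t)%:R.

Lemma sum_tupleS (F : seq bool -> R) f :
  \sum_(t : f.+1.-tuple bool) F t = \sum_(b : bool) \sum_(t : f.-tuple bool) F (b :: t).
Proof.
rewrite pair_big /= (reindex (fun bt : bool * f.-tuple bool => cons_tuple bt.1 bt.2)) /=.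
  by apply: eq_bigr => -[b t] _.
exists (fun t : f.+1.-tuple bool => (thead t, behead_tuple t)).
  move=> [b t] _ /=; rewrite theadE; congr pair; exact: val_inj.
by move=> t _ /=; apply: val_inj; rewrite /= (tuple_eta t).
Qed.

Lemma cw_cons b (t : seq bool) :
  choice_weight p (b :: t) = (if b then p else 1 - p) * choice_weight p t.
Proof. by rewrite /choice_weight big_cons. Qed.

Lemma weight_sum f : \sum_(t : f.-tuple bool) choice_weight p t = 1.
Proof.
elim: f => [|f IH].
  rewrite (eq_bigr (fun _ => 1)); last by move=> t _; rewrite tuple0 /choice_weight big_nil.
  by rewrite sumr_const card_tuple expn0.
rewrite sum_tupleS big_bool /=.
under eq_bigr do rewrite cw_cons.
under [X in _ + X = _]eq_bigr do rewrite cw_cons.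
by rewrite /= -!mulr_sumr IH !mulr1 addrC subrK.
Qed.

Lemma EL0 s : EL 0 s = (sumn s)%:R.
Proof.
rewrite /EL (eq_bigr (fun _ => (sumn s)%:R)).
  by rewrite sumr_const card_tuple expn0.
move=> t _; rewrite tuple0 /choice_weight big_nil mul1r /=.
by case: ifP.
Qed.

Lemma EL_S f s : EL f.+1 s =
  if 0%N \in s then (sumn s)%:R
  else p * EL f (mb_step true s) + (1 - p) * EL f (mb_step false s).
Proof.
rewrite /EL (sum_tupleS (fun t => choice_weight p t * (mb_run s t)%:R)) big_bool /=.
under eq_bigr do rewrite cw_cons.
under [X in _ + X = _]eq_bigr do rewrite cw_cons.
case: ifP => H0.
  by rewrite -!mulr_suml -!mulr_sumr weight_sum !mulr1 -mulrDl addrC subrK mul1r.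
by rewrite !mulr_sumr; congr (_ + _); apply: eq_bigr => t _; rewrite mulrA.
Qed.

Fixpoint G (f m D : nat) {struct f} : R :=
  match f with
  | 0 => D%:R
  | f'.+1 =>
    if m is m'.+1 then
      (if D is D'.+1 then (1 - p) * G f' m' (D + c) + p * G f' m D' else G f' m' c)
    else D%:R
  end.

Lemma EL_G f : forall s m D, rep c s m D -> f = (c.+1 * m + D)%N -> EL f s = G f m D.
Proof.
elim: f => [|f IH] s m D Hr Hf.
  rewrite EL0 (rep_sum Hr) -Hf /=.
  by have -> : D = 0%N by lia.
rewrite EL_S (rep_zero Hr).
case: m Hr Hf => [|m] Hr Hf /=.
  by rewrite (rep_sum Hr) muln0 add0n.
case: D Hr Hf => [|D] Hr Hf.
  rewrite (IH _ _ _ (rep_big0 Hc Hr)); last by lia.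
  rewrite (IH _ _ _ (rep_little Hc Hr)); last by lia.
  by rewrite add0n -mulrDl addrC subrK mul1r.
rewrite (IH _ _ _ (rep_big Hc Hr)); last by lia.
rewrite (IH _ _ _ (rep_little Hc Hr)); last by lia.
by rewrite addrC.
Qed.

Lemma M_G n : M c.+1 n p = G (c.+1 * n) n 0.
Proof.
rewrite /M -/(EL _ _) (@EL_G _ _ n 0); first by [].
  exists n, 0%N; split; [lia|lia| |].
    by rewrite subnn muln0.
  by rewrite /st /= subn0.
by rewrite addn0.
Qed.

End Part1.


Local Open Scope ring_scope.

Section Part2.
Variable R : realFieldType.
Variable p : R.
Variable c : nat.
Hypothesis Hc : (0 < c)%N.
Local Notation q := (1 - p).
Local Notation G := (G p c).

Definition B (D u : nat) : R :=
  D%:R / (u + D + c * u)%:R * ('C(u + D + c * u, u))%:R.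

Lemma B_rec D u : B D.+1 u.+1 = B (D.+1 + c) u + B D u.+1.
Proof.
rewrite /B.
set n1 := (u + D.+1 + c * u.+1)%N.
have E1 : (u.+1 + D.+1 + c * u.+1 = n1.+1)%N by rewrite /n1; lia.
have E2 : (u + (D.+1 + c) + c * u = n1)%N by rewrite /n1 mulnS; lia.
have E3 : (u.+1 + D + c * u.+1 = n1)%N by rewrite /n1; lia.
rewrite E1 E2 E3.
have F1 : ('C(n1.+1, u.+1))%:R = (n1.+1)%:R * ('C(n1, u))%:R / (u.+1)%:R :> R.
  rewrite -natrM (mul_bin_diag n1.+1 u) natrM mulrAC divff ?mul1r //.
  by rewrite pnatr_eq0.
have F2 : ('C(n1, u.+1))%:R = (n1 - u)%:R * ('C(n1, u))%:R / (u.+1)%:R :> R.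
  rewrite -natrM -(mul_bin_left n1 u) natrM mulrAC divff ?mul1r //.
  by rewrite pnatr_eq0.
have E4 : (n1 - u = D.+1 + c * u.+1)%N by rewrite /n1; lia.
rewrite F1 F2 E4.
have Hn1 : (n1%:R : R) = u%:R + D%:R + 1 + c%:R * u%:R + c%:R.
  by rewrite /n1 !natrD !natrM -!natr1; ring.
have nz1 : (n1%:R : R) != 0 by rewrite pnatr_eq0 /n1; lia.
have nz2 : ((n1.+1)%:R : R) != 0 by rewrite pnatr_eq0.
have nz3 : ((u.+1)%:R : R) != 0 by rewrite pnatr_eq0.
move: nz1 nz2 nz3 Hn1.
rewrite !natrD !natrM -!natr1.
move: (n1%:R : R) => x; move: ('C(n1, u)%:R : R) => X.
move=> nz1 nz2 nz3 Hx.
rewrite -?natr1 in nz2.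
by field; rewrite nz1 nz2 nz3.
Qed.

Lemma B0 D : B D.+1 0 = 1.
Proof. by rewrite /B muln0 addn0 add0n bin0 mulr1 divff // pnatr_eq0. Qed.

Lemma B0u u : B 0 u = 0.
Proof. by rewrite /B mul0r mul0r. Qed.

Definition Hh m D m' : R :=
  if (1 <= m')%N && (m' <= m)%N then
    B D (m - m') * q ^+ (m - m') * p ^+ (D + c * (m - m'))%N
  else 0.

Definition Hb m D m' : R :=
  match D with 0 => (m' == m)%:R | _ => Hh m D m' end.

Lemma H_rec m D m' : (1 <= m')%N -> (m' <= m.+1)%N ->
  Hh m.+1 D.+1 m' = q * Hh m (D.+1 + c) m' + p * Hb m.+1 D m'.
Proof.
move=> H1 H2; rewrite /Hb /Hh H1 H2 /=.
case: (ltnP m m') => Hm.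
  have E : m' = m.+1 by lia.
  subst m'; rewrite subnn muln0 !addn0 B0 expr0 !mulr1 mul1r mulr0 add0r.
  case: D => [|D]; first by rewrite eqxx mulr1.
  by rewrite ?B0 ?expr0 ?mulr1 ?mul1r exprS.
have -> : (m.+1 - m' = (m - m').+1)%N by lia.
set u := (m - m')%N.
have Hb' : (match D with 0 => (m' == m.+1)%:R | _.+1 => B D u.+1 * q ^+ u.+1 * p ^+ (D + c * u.+1)%N end : R)
    = B D u.+1 * q ^+ u.+1 * p ^+ (D + c * u.+1)%N.
  case: D => [|D]; last by [].
  by rewrite B0u !mul0r; have -> : (m' == m.+1) = false by apply/eqP; lia.
rewrite Hb' B_rec.
have -> : (D.+1 + c + c * u = D.+1 + c * u.+1)%N by rewrite mulnS; lia.
rewrite (exprS q u) (_ : (D.+1 + c * u.+1)%N = (D + c * u.+1).+1); last by lia.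
rewrite exprS; ring.
Qed.

Definition Phi m D : R :=
  if m is m1.+1 then
    \sum_(1 <= b < (D + c * m1).+1)
       (b + c)%:R * ('C(m1 + (D + c * m1 - b), m1))%:R * q ^+ m * p ^+ (D + c * m1 - b)
  else D%:R.

Lemma Phi_rec m D : Phi m.+1 D.+1 = q * Phi m (D.+1 + c) + p * Phi m.+1 D.
Proof.
rewrite /Phi.
case: m => [|m].
  rewrite !muln0 !addn0 big_nat_recr //= subnn bin0 expr0 expr1 !mulr1.
  rewrite addrC mulr_sumr; congr (_ + _); first by rewrite mulrC.
  apply: eq_big_nat => b /andP[Hb1 Hb2].
  rewrite !add0n !bin0 (_ : (D.+1 - b = (D - b).+1)%N); last by lia.
  by rewrite exprS; ring.
set top := (D.+1 + c * m.+1)%N.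
have Etop : (D.+1 + c + c * m = top)%N by rewrite /top mulnS; lia.
rewrite Etop.
have Etop' : (D + c * m.+1).+1 = top by rewrite /top.
rewrite Etop'.
transitivity (\sum_(1 <= b < top.+1)
   ((b + c)%:R * ('C(m + (top - b), m))%:R * q ^+ m.+2 * p ^+ (top - b)
  + (b + c)%:R * ('C(m + (top - b), m.+1))%:R * q ^+ m.+2 * p ^+ (top - b))).
  apply: eq_big_nat => b _.
  by rewrite addSn binS natrD; ring.
rewrite big_split /=; congr (_ + _).
  by rewrite mulr_sumr; apply: eq_big_nat => b _; rewrite exprS; ring.
rewrite big_nat_recr /=; last by rewrite /top; lia.
rewrite subnn addn0 bin_small // mulr0 !mul0r addr0 mulr_sumr.
apply: eq_big_nat => b /andP[Hb1 Hb2].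
have -> : (top - b = (D + c * m.+1 - b).+1)%N by rewrite /top; lia.
rewrite addnS -addSn.
rewrite (exprS p); ring.
Qed.

Definition F m D := G (c.+1 * m + D) m D.

Lemma F0 D : F 0 D = D%:R.
Proof. by rewrite /F muln0 add0n; case: D. Qed.

Lemma FS0 m : F m.+1 0 = F m c.
Proof.
rewrite /F addn0 (_ : (c.+1 * m.+1 = (c.+1 * m + c).+1)%N); last by rewrite mulnS; lia.
by [].
Qed.

Lemma FSS m D : F m.+1 D.+1 = q * F m (D.+1 + c) + p * F m.+1 D.
Proof.
rewrite /F (_ : (c.+1 * m.+1 + D.+1 = (c.+1 * m + (D.+1 + c)).+1)%N); last by rewrite mulnS; lia.
rewrite /= [X in p * G X _ _](_ : _ = (c.+1 * m.+1 + D)%N) //.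
by rewrite mulnS; lia.
Qed.

Lemma decomp m D : (0 < D)%N ->
  F m D = Phi m D + \sum_(1 <= m' < m.+1) Hh m D m' * (F m' 0 - Phi m' 0).
Proof.
elim: m D => [|m IHm] D HD.
  by rewrite F0 big_geq // addr0.
elim: D HD => [//|D IHD] _.
rewrite FSS Phi_rec (IHm (D.+1 + c)%N) //.
have Fb : F m.+1 D = Phi m.+1 D +
    \sum_(1 <= m' < m.+2) Hb m.+1 D m' * (F m' 0 - Phi m' 0).
  case: D IHD => [|D] IHD.
    rewrite big_nat_recr // big_nat_cond big1 ?add0r; last first.
      move=> i /andP[/andP[_ Hi] _]; rewrite /Hb (_ : (i == m.+1) = false) ?mul0r //.
      by apply/eqP; lia.
    by rewrite /Hb eqxx mul1r Monoid.mul1m addrC subrK.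
  by rewrite IHD.
rewrite Fb.
rewrite [X in _ = _ + X](eq_big_nat _ _ (F2 := fun m' => (q * Hh m (D.+1 + c) m' + p * Hb m.+1 D m') * (F m' 0 - Phi m' 0))); last first.
  by move=> i /andP[H1 H2]; rewrite H_rec.
under eq_bigr do rewrite mulrDl -!mulrA.
rewrite big_split /= -!mulr_sumr.
rewrite [X in _ = _ + (q * X + _)]big_nat_recr //.
rewrite [X in Monoid.Law.sort X _ _]/= /Hh ltnn andbF mul0r Monoid.mulm1.
rewrite -/(Hh _ _ _).
ring.
Qed.

End Part2.


Local Open Scope ring_scope.

Lemma ceil_cond c m b l : (0 < c)%N -> (1 <= b)%N -> (1 <= l <= m.+1)%N ->
  (l < (m.+2 - ceil_div (b + c) c).+1)%N = (b < (c * (m.+1 - l)).+1)%N.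
Proof.
move=> Hc Hb /andP[Hl1 Hl2]; rewrite /ceil_div.
have -> : (b + c + c.-1 = 1 * c + (b + c.-1))%N by lia.
rewrite divnMDl //; set t := ((b + c.-1) %/ c)%N.
have E1 : (l < (m.+2 - (1 + t)).+1)%N = (t < (m.+1 - l).+1)%N by apply/idP/idP; lia.
rewrite E1 /t ltn_divLR // mulSn mulnC.
by apply/idP/idP; lia.
Qed.

Lemma Bsk (R : realFieldType) c u : B R c c u = sk c.+1 u.+1.
Proof.
rewrite /B /sk.
have E : ((c.+1 * u.+1).-1 = u + c + c * u)%N by rewrite mulSn mulnS; lia.
by rewrite E.
Qed.

Section Final.
Variable R : realFieldType.
Variable p : R.
Variable c : nat.
Hypothesis Hc : (0 < c)%N.
Hypothesis Hp0 : p != 0.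
Hypothesis Hq0 : 1 - p != 0.
Local Notation q := (1 - p).

Lemma part1 m : \sum_(1 <= m' < m.+2) Hh p c m.+1 c m' * F p c m' 0 =
  q^-1 * \sum_(1 <= i < m.+2) sk c.+1 i * (p ^+ c * q) ^+ i * F p c (m.+2 - i) 0.
Proof.
rewrite big_nat_rev mulr_sumr; apply: eq_big_nat => i /andP[H1 H2].
have -> : (1 + m.+2 - i.+1 = m.+2 - i)%N by lia.
case: i H1 H2 => [//|u] H1 H2.
rewrite /Hh (_ : (1 <= m.+2 - u.+1)%N && (m.+2 - u.+1 <= m.+1)%N); last by apply/andP; split; lia.
have -> : (m.+1 - (m.+2 - u.+1) = u)%N by lia.
rewrite Bsk exprMn -exprM mulnS exprS.
by field.
Qed.

Lemma sum_shift N (f : nat -> R) :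
  \sum_(c.+1 <= j < N) f j = \sum_(1 <= b < N - c) f (b + c)%N.
Proof. by rewrite -add1n big_addn. Qed.

Lemma wt m b : (b <= c + c * m)%N ->
  (p ^+ c * q) ^+ m.+2 * q^-1 * p^-1 ^+ (b + c) = q ^+ m.+1 * p ^+ (c + c * m - b).
Proof.
move=> Hb.
rewrite exprMn -exprM exprVn.
have -> : (c * m.+2 = (c + c * m - b) + (b + c))%N by rewrite !mulnS; lia.
rewrite exprD.
have Hpb : p ^+ (b + c) != 0 by rewrite expf_neq0.
move: Hpb; move: (p ^+ (b + c)) => P2 Hpb.
rewrite exprS; field.
by rewrite Hpb Hq0.
Qed.

Definition Tm m l b : R :=
  sk c.+1 l * ('C(c.+1 * (m.+2 - l) - 1 - (b + c), m.+2 - l - 1))%:R *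
  (b + c)%:R * q ^+ m.+1 * p ^+ (c + c * m - b).

Lemma claimA m : \sum_(1 <= m' < m.+2) Hh p c m.+1 c m' * Phi p c m' 0 =
  \sum_(1 <= l < m.+2) \sum_(1 <= b < (c + c * m).+1)
     (if (b < (c * (m.+1 - l)).+1)%N then Tm m l b else 0).
Proof.
rewrite big_nat_rev; apply: eq_big_nat => l /andP[H1 H2].
have -> : (1 + m.+2 - l.+1 = m.+2 - l)%N by lia.
case: l H1 H2 => [//|u] H1 H2.
have [s Hs] : exists s, m = (u + s)%N by exists (m - u)%N; lia.
subst m.
have -> : ((u + s).+2 - u.+1 = s.+1)%N by lia.
rewrite /Hh (_ : (1 <= s.+1)%N && (s.+1 <= (u + s).+1)%N); last by apply/andP; split; lia.
have -> : ((u + s).+1 - s.+1 = u)%N by lia.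
have -> : ((u + s).+1 - u.+1 = s)%N by lia.
rewrite Bsk /Phi mulr_sumr.
rewrite (big_nat_widen _ _ (c + c * (u + s)).+1); last by rewrite add0n mulnDr; lia.
rewrite big_mkcond; apply: eq_bigr => b _ /=.
rewrite add0n; case: ifP => Hb //.
rewrite /Tm.
have -> : ((u + s).+2 - u.+1 = s.+1)%N by lia.
have -> : (c.+1 * s.+1 - 1 - (b + c) = s + (c * s - b))%N by rewrite mulSn mulnS; lia.
have -> : (s.+1 - 1 = s)%N by lia.
have -> : (c + c * (u + s) - b = (c + c * u) + (c * s - b))%N by rewrite mulnDr; lia.
rewrite (exprD p (c + c * u)) (_ : ((u + s).+1 = u + s.+1)%N); last by lia.
rewrite (exprD q u) (exprD p c); ring.
Qed.


Lemma L_eq m : Lk c.+1 m.+2 p =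
  Phi p c m.+1 c - \sum_(1 <= m' < m.+2) Hh p c m.+1 c m' * Phi p c m' 0.
Proof.
rewrite claimA /Lk [c.+1.-1]/= sum_shift.
have -> : ((c * m.+2).+1 - c = (c + c * m).+1)%N by rewrite !mulnS; lia.
rewrite [X in _ = _ - X]exchange_big_nat /=.
rewrite mulr_sumr /Phi -sumrB; apply: eq_big_nat => b /andP[Hb1 Hb2].
rewrite /dk [c.+1.-1]/=.
rewrite (_ : (c.+1 <= b + c)%N && (b + c <= c * m.+2)%N); last first.
  by apply/andP; split; [lia | rewrite !mulnS; lia].
have Hceil : (1 <= ceil_div (b + c) c)%N.
  by rewrite /ceil_div leq_divRL // mul1n; lia.
have -> : forall A B C D : R, A * (B * C * D) = (A * D) * B * C by move=> *; ring.
rewrite wt; last by lia.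
rewrite [X in _ * (_ - X) = _](big_nat_widen _ _ m.+2); last by lia.
rewrite [X in _ * (_ - X) = _]big_mkcond /=.
rewrite mulrBr mulr_sumr; congr (_ - _).
  have -> : (c.+1 * m.+2 - 2 - (b + c) = m + (c + c * m - b))%N by rewrite mulSn !mulnS; lia.
  have -> : (m.+2 - 2 = m)%N by lia.
  ring.
apply: eq_big_nat => l /andP[Hl1 Hl2].
rewrite ceil_cond //; last by apply/andP; split; lia.
case: ifP => _; last by rewrite !mulr0.
rewrite /Tm; ring.
Qed.

End Final.

Local Open Scope ring_scope.
Unset Implicit Arguments.
Theorem lemma3p1 (R : realFieldType) (k : nat) (p : R) :
  (2 <= k)%N -> 0 < p -> p < 1 ->
  M k 1 p = (k - 1)%:R /\
  (forall n : nat, (2 <= n)%N ->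
     M k n p =
       (1 - p)^-1 * \sum_(1 <= i < n)
          sk k i * (p ^+ (k - 1) * (1 - p)) ^+ i * M k (n - i) p
       + Lk k n p).
Proof.
move=> Hk Hp Hp1.
have [c Hkc] : exists c, k = c.+1 by exists k.-1; lia.
subst k.
have Hc : (0 < c)%N by lia.
have Hp0 : p != 0 by apply/negbT/gt_eqF.
have Hq0 : 1 - p != 0 by apply/negbT/gt_eqF; rewrite subr_gt0.
have MF : forall n, M c.+1 n p = F p c n 0 by move=> n; rewrite (M_G _ Hc) /F addn0.
have E1 : (c.+1 - 1 = c)%N by lia.
rewrite E1; split.
  by rewrite MF (FS0 _ Hc) F0.
move=> n Hn.
have [m ->] : exists m, n = m.+2 by exists (n - 2)%N; lia.
rewrite MF (FS0 _ Hc) (decomp _ Hc) //.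
under [X in _ = _ * X + _]eq_bigr => i _ do rewrite MF.
under [X in _ + X = _]eq_bigr do rewrite mulrBr.
rewrite sumrB (part1 Hc Hp0 Hq0) (L_eq Hc Hp0 Hq0).
ring.
Qed.
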